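(* Let $\mathbf{p}$ be a list of explainable predicate constants, let $R$ be an S-rule $L_1\leftrightarrow L_2\Leftarrow G$, and let $R_1$, $R_2$ be the D-rules $L_1\lor\overline{L_2}\Leftarrow G$ and $\overline{L_1}\lor L_2\Leftarrow G$. Then the conjunction $CC$ of completeness constraints for $\mathbf{p}$ intuitionistically entails $\mathrm{tr}_s[R]\leftrightarrow\mathrm{tr}_d[R_1]\land\mathrm{tr}_d[R_2]$.
   Context: $G$ is a first-order formula without $\to$; $L_1,L_2$ are literals whose predicate symbols belong to $\mathbf{p}$; $\overline{L}$ denotes the literal complementary to $L$ (i.e. $\overline{A}=\neg A$, $\overline{\neg A}=A$). For each $p\in\mathbf{p}$, $\widehat p$ is a new predicate constant of the same arity; for $A=p(\mathbf{t})$, $\widehat A=\widehat p(\mathbf{t})$; $\widetilde\forall$ is universal closure. $\mathrm{tr}_s[p_1(\mathbf{t}^1)\leftrightarrow p_2(\mathbf{t}^2)\Leftarrow G]=\mathrm{tr}_s[\neg p_1(\mathbf{t}^1)\leftrightarrow\neg p_2(\mathbf{t}^2)\Leftarrow G]$ is the conjunction of $\widetilde\forall(\neg\neg G\land p_1(\mathbf{t}^1)\to p_2(\mathbf{t}^2))$, $\widetilde\forall(\neg\neg G\land p_2(\mathbf{t}^2)\to p_1(\mathbf{t}^1))$, $\widetilde\forall(\neg\neg G\land \widehat{p_1}(\mathbf{t}^1)\to \widehat{p_2}(\mathbf{t}^2))$, $\widetilde\forall(\neg\neg G\land \widehat{p_2}(\mathbf{t}^2)\to \widehat{p_1}(\mathbf{t}^1))$;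 $\mathrm{tr}_s[\neg p_1(\mathbf{t}^1)\leftrightarrow p_2(\mathbf{t}^2)\Leftarrow G]=\mathrm{tr}_s[p_1(\mathbf{t}^1)\leftrightarrow\neg p_2(\mathbf{t}^2)\Leftarrow G]$ is the conjunction of $\widetilde\forall(\neg\neg G\land \widehat{p_1}(\mathbf{t}^1)\to p_2(\mathbf{t}^2))$, $\widetilde\forall(\neg\neg G\land p_2(\mathbf{t}^2)\to \widehat{p_1}(\mathbf{t}^1))$, $\widetilde\forall(\neg\neg G\land p_1(\mathbf{t}^1)\to \widehat{p_2}(\mathbf{t}^2))$, $\widetilde\forall(\neg\neg G\land \widehat{p_2}(\mathbf{t}^2)\to p_1(\mathbf{t}^1))$. For a D-rule $\bigvee_{A\in Pos}A\lor\bigvee_{A\in Neg}\neg A\Leftarrow G$ ($Pos,Neg$ sets of atoms), $\mathrm{tr}_d$ gives $\widetilde\forall\big(\neg\neg G\land\bigwedge_{A\in Pos}(\widehat A\lor\neg\widehat A)\land\bigwedge_{A\in Neg}(A\lor\neg A)\to\bigvee_{A\in Pos}A\lor\bigvee_{A\in Neg}\widehat A\big)$. $CC$ is the conjunction over $p\in\mathbf{p}$ of $\forall\mathbf{x}\neg(p(\mathbf{x})\land\widehat p(\mathbf{x}))$ and $\forall\mathbf{x}\neg(\neg p(\mathbf{x})\land\neg\widehat p(\mathbf{x}))$. Entailment is in first-order intuitionistic logic. *)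

(* Defs.v *)
(* Deep embedding of first-order intuitionistic logic with
   Kripke semantics (increasing domains), which is sound and complete for
   intuitionistic first-order entailment. *)
From Stdlib Require Import List Arith.
Import ListNotations.

Inductive term : Type :=
| TVar : nat -> term
| TFun : nat -> list term -> term.

(* Predicate symbols: original ones p, and the fresh copies p-hat. *)
Inductive psym : Type :=
| Orig : nat -> psym
| Hat  : nat -> psym.

Inductive formula : Type :=
| FAtom   : psym -> list term -> formula
| FEq     : term -> term -> formula
| FBot    : formula
| FTop    : formula
| FNeg    : formula -> formula
| FAnd    : formula -> formula -> formula
| FOr     : formula -> formula -> formula
| FImp    : formula -> formula -> formula
| FForall : nat -> formula -> formula
| FExists : nat -> formula -> formula.

Definition FIff (A B : formula) : formula := FAnd (FImp A B) (FImp B A).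

Fixpoint fv_term (t : term) : list nat :=
  match t with
  | TVar x => [x]
  | TFun _ ts => (fix go (l : list term) : list nat :=
                    match l with [] => [] | u :: l' => fv_term u ++ go l' end) ts
  end.

Definition fv_terms (ts : list term) : list nat := flat_map fv_term ts.

Fixpoint fv (F : formula) : list nat :=
  match F with
  | FAtom _ ts => fv_terms ts
  | FEq t1 t2 => fv_term t1 ++ fv_term t2
  | FBot | FTop => []
  | FNeg A => fv A
  | FAnd A B | FOr A B | FImp A B => fv A ++ fv B
  | FForall x A | FExists x A => remove Nat.eq_dec x (fv A)
  end.

Definition uclose (F : formula) : formula :=
  fold_right FForall F (nodup Nat.eq_dec (fv F)).

Fixpoint no_imp (F : formula) : Prop :=
  match F with
  | FAtom _ _ | FEq _ _ | FBot | FTop => True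
  | FNeg A | FForall _ A | FExists _ A => no_imp A
  | FAnd A B | FOr A B => no_imp A /\ no_imp B
  | FImp _ _ => False
  end.

Fixpoint hat_free (F : formula) : Prop :=
  match F with
  | FAtom (Hat _) _ => False
  | FAtom (Orig _) _ | FEq _ _ | FBot | FTop => True
  | FNeg A | FForall _ A | FExists _ A => hat_free A
  | FAnd A B | FOr A B | FImp A B => hat_free A /\ hat_free B
  end.

Definition bigAnd (l : list formula) : formula := fold_right FAnd FTop l.
Definition bigOr  (l : list formula) : formula := fold_right FOr FBot l.

Definition atom : Type := (nat * list term)%type.
Definition atomF (A : atom) : formula := FAtom (Orig (fst A)) (snd A).
Definition hatF  (A : atom) : formula := FAtom (Hat (fst A)) (snd A).

(* A literal: (true, A) is A, (false, A) is \neg A. *)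
Record literal : Type := Lit { lpos : bool; latom : atom }.
Definition compl (L : literal) : literal := Lit (negb (lpos L)) (latom L).

Definition nnF (G : formula) : formula := FNeg (FNeg G).

Definition tr_s (L1 L2 : literal) (G : formula) : formula :=
  let A1 := atomF (latom L1) in let A2 := atomF (latom L2) in
  let H1 := hatF (latom L1) in let H2 := hatF (latom L2) in
  let r := fun X Y => uclose (FImp (FAnd (nnF G) X) Y) in
  if Bool.eqb (lpos L1) (lpos L2) then
    bigAnd [r A1 A2; r A2 A1; r H1 H2; r H2 H1]
  else
    bigAnd [r H1 A2; r A2 H1; r A1 H2; r H2 A1].

(* tr_d for the D-rule  \/_{A in Pos} A \/ \/_{A in Neg} \neg A <= G *)
Definition tr_d_PN (Pos Neg : list atom) (G : formula) : formula :=
  uclose (FImp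
    (FAnd (nnF G)
      (FAnd (bigAnd (map (fun A => FOr (hatF A) (FNeg (hatF A))) Pos))
            (bigAnd (map (fun A => FOr (atomF A) (FNeg (atomF A))) Neg))))
    (FOr (bigOr (map atomF Pos)) (bigOr (map hatF Neg)))).

Definition tr_d (head : list literal) (G : formula) : formula :=
  tr_d_PN (map latom (filter lpos head))
          (map latom (filter (fun L => negb (lpos L)) head)) G.

Definition var_tuple (n : nat) : list term := map TVar (seq 0 n).
Definition forall_tuple (n : nat) (F : formula) : formula :=
  fold_right FForall F (seq 0 n).

Definition CC (ar : nat -> nat) (ps : list nat) : formula :=
  bigAnd (flat_map (fun p =>
    let x := var_tuple (ar p) in
    [ forall_tuple (ar p) (FNeg (FAnd (FAtom (Orig p) x) (FAtom (Hat p) x)));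
      forall_tuple (ar p) (FNeg (FAnd (FNeg (FAtom (Orig p) x))
                                      (FNeg (FAtom (Hat p) x)))) ]) ps).

Record kmodel : Type := KModel {
  kW : Type;
  kle : kW -> kW -> Prop;
  kle_refl : forall w, kle w w;
  kle_trans : forall u v w, kle u v -> kle v w -> kle u w;
  kU : Type;
  kdom : kW -> kU -> Prop;
  kdom_mono : forall w w' d, kle w w' -> kdom w d -> kdom w' d;
  kfun : nat -> list kU -> kU;
  kfun_dom : forall w f ds, Forall (kdom w) ds -> kdom w (kfun f ds);
  kpred : kW -> psym -> list kU -> Prop;
  kpred_mono : forall w w' p ds, kle w w' -> kpred w p ds -> kpred w' p ds
}.

Section Sem.
Variable M : kmodel.

Fixpoint eval (rho : nat -> kU M) (t : term) : kU M :=
  match t with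
  | TVar x => rho x
  | TFun f ts => kfun M f ((fix go (l : list term) : list (kU M) :=
                   match l with [] => [] | u :: l' => eval rho u :: go l' end) ts)
  end.

Definition upd (rho : nat -> kU M) (x : nat) (d : kU M) : nat -> kU M :=
  fun y => if Nat.eqb y x then d else rho y.

Fixpoint forces (w : kW M) (rho : nat -> kU M) (F : formula) : Prop :=
  match F with
  | FAtom p ts => kpred M w p (map (eval rho) ts)
  | FEq t1 t2 => eval rho t1 = eval rho t2
  | FBot => False
  | FTop => True
  | FNeg A => forall w', kle M w w' -> ~ forces w' rho A
  | FAnd A B => forces w rho A /\ forces w rho B
  | FOr A B => forces w rho A \/ forces w rho B
  | FImp A B => forall w', kle M w w' -> forces w' rho A -> forces w' rho B
  | FForall x A => forall w', kle M w w' ->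
        forall d, kdom M w' d -> forces w' (upd rho x d) A
  | FExists x A => exists d, kdom M w d /\ forces w (upd rho x d) A
  end.
End Sem.

Definition ientails (Gamma : formula) (F : formula) : Prop :=
  forall (M : kmodel) (w : kW M) (rho : nat -> kU M),
    (forall x, kdom M w (rho x)) ->
    forces M w rho Gamma -> forces M w rho F.

(* Main.v *)
Require Import Defs.
From Stdlib Require Import List Arith Lia FunctionalExtensionality.
Import ListNotations.

Lemma forces_mono (M : kmodel) (F : formula) : forall w w' rho,
  kle M w w' -> forces M w rho F -> forces M w' rho F.
Proof.
  induction F; intros w w' rho Hle H; simpl in *.
  - eapply kpred_mono; eauto.
  - exact H.
  - exact H.
  - exact I.
  - intros w'' H2. apply H. eapply kle_trans; eauto.
  - destruct H; split; eauto.
  - destruct H; [left|right]; eauto.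
  - intros w'' H2. apply H. eapply kle_trans; eauto.
  - intros w'' H2. apply H. eapply kle_trans; eauto.
  - destruct H as [d [Hd H]]. exists d. split; [eapply kdom_mono; eauto | eauto].
Qed.

Lemma eval_dom (M : kmodel) w rho (H : forall x, kdom M w (rho x)) :
  forall t, kdom M w (eval M rho t).
Proof.
  fix IH 1. intros [x|f ts].
  - simpl. apply H.
  - simpl. apply kfun_dom. revert ts. fix go 1. intros [|a l]; simpl; constructor.
    + apply IH.
    + apply go.
Qed.

Lemma fold_forall_iff (M : kmodel) (F : formula) xs : forall w rho,
  (forall x, kdom M w (rho x)) ->
  (forces M w rho (fold_right FForall F xs) <->
   forall w' rho', kle M w w' -> (forall x, ~ In x xs -> rho' x = rho x) ->
     (forall x, kdom M w' (rho' x)) -> forces M w' rho' F).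
Proof.
  induction xs as [|x xs IH]; intros w rho Hd; simpl.
  - split.
    + intros H w' rho' Hle Hag _.
      assert (rho' = rho) by (apply functional_extensionality; intro y; apply Hag; auto).
      subst. eapply forces_mono; eauto.
    + intros H. apply (H w rho (kle_refl M w)); auto.
  - split.
    + intros H w' rho' Hle Hag Hdom.
      specialize (H w' Hle (rho' x) (Hdom x)).
      rewrite IH in H.
      * apply (H w' rho' (kle_refl M w')); auto.
        intros y Hy. unfold upd. destruct (Nat.eqb y x) eqn:E.
        -- apply Nat.eqb_eq in E. subst. reflexivity.
        -- apply Hag. intros [E'|E']; [subst; rewrite Nat.eqb_refl in E; discriminate|tauto].
      * intros y. unfold upd. destruct (Nat.eqb y x); auto.
        eapply kdom_mono; eauto.
    + intros H w1 Hle d Hd1. rewrite IH.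
      * intros w'' rho'' Hle2 Hag Hdom. apply H; auto.
        -- eapply kle_trans; eauto.
        -- intros y Hy. rewrite Hag by tauto. unfold upd.
           destruct (Nat.eqb y x) eqn:E; auto.
           apply Nat.eqb_eq in E. subst. exfalso; apply Hy; auto.
      * intros y. unfold upd. destruct (Nat.eqb y x); auto.
        eapply kdom_mono; eauto.
Qed.

Definition Ag {U : Type} (rho rho' : nat -> U) (S : list nat) :=
  forall x, ~ In x S -> rho' x = rho x.

Definition RuleP (M : kmodel) w (r : nat -> kU M) P C :=
  forall v, (kle M w v /\ forall x, kdom M v (r x)) -> forces M v r P -> forces M v r C.

Lemma rule_iff (M : kmodel) w rho P C S :
  (forall x, In x (fv (FImp P C)) <-> In x S) ->
  (forall x, kdom M w (rho x)) ->
  (forces M w rho (uclose (FImp P C)) <->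
   forall rho', Ag rho rho' S -> RuleP M w rho' P C).
Proof.
  intros HS Hd. unfold uclose. rewrite fold_forall_iff by exact Hd.
  unfold Ag, RuleP. split.
  - intros H rho' Hag v [Hle Hdv] HP.
    apply (H v rho' Hle); auto.
    + intros x Hx. apply Hag. rewrite <- HS, <- (nodup_In Nat.eq_dec). exact Hx.
    + apply kle_refl.
  - intros H w' rho' Hle Hag Hdom w'' Hle2 HP.
    apply (H rho').
    + intros x Hx. apply Hag. rewrite (nodup_In Nat.eq_dec), HS. exact Hx.
    + split; [eapply kle_trans; eauto|]. intros x; eapply kdom_mono; eauto.
    + exact HP.
Qed.

Lemma map_nth_seq' {A} (l : list A) (f : nat -> A) :
  map (fun i => nth i l (f i)) (seq 0 (length l)) = l.
Proof.
  revert f; induction l as [|a l IH]; intros f; simpl; auto.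
  f_equal. rewrite <- seq_shift, map_map. simpl. apply (IH (fun i => f (S i))).
Qed.

Lemma bigAnd_in M w r l F : forces M w r (bigAnd l) -> In F l -> forces M w r F.
Proof.
  induction l; simpl; [tauto|]. intros [H1 H2] [->|H]; auto.
Qed.

Lemma CC_at (M : kmodel) ar ps w rho p ts :
  (forall x, kdom M w (rho x)) -> forces M w rho (CC ar ps) -> In p ps ->
  length ts = ar p -> forall v r', kle M w v -> (forall x, kdom M v (r' x)) ->
  forces M v r' (FNeg (FAnd (FAtom (Orig p) ts) (FAtom (Hat p) ts))) /\
  forces M v r' (FNeg (FAnd (FNeg (FAtom (Orig p) ts)) (FNeg (FAtom (Hat p) ts)))).
Proof.
  intros Hd HCC Hp Hlen v r' Hle Hdv.
  set (l := map (eval M r') ts).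
  set (r'' := fun i => nth i l (rho i)).
  assert (Heq : map (eval M r'') (var_tuple (ar p)) = l).
  { unfold var_tuple. rewrite map_map. simpl. unfold r''.
    rewrite <- Hlen. replace (length ts) with (length l) by (unfold l; apply length_map).
    apply map_nth_seq'. }
  assert (Hdom'' : forall x, kdom M v (r'' x)).
  { intros x. unfold r''. destruct (Nat.lt_ge_cases x (length l)) as [Hx|Hx].
    - pose proof (nth_In l (rho x) Hx) as Hin. unfold l in *. apply in_map_iff in Hin.
      destruct Hin as [t [Ht _]]. rewrite <- Ht. apply eval_dom; auto.
    - rewrite nth_overflow by exact Hx. eapply kdom_mono; eauto. }
  assert (Hag : forall x, ~ In x (seq 0 (ar p)) -> r'' x = rho x).
  { intros x Hx. unfold r''. apply nth_overflow. rewrite in_seq in Hx.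
    unfold l; rewrite length_map, Hlen. lia. }
  assert (Hin : forall B, In (forall_tuple (ar p) B) [forall_tuple (ar p) (FNeg (FAnd (FAtom (Orig p) (var_tuple (ar p))) (FAtom (Hat p) (var_tuple (ar p)))));
      forall_tuple (ar p) (FNeg (FAnd (FNeg (FAtom (Orig p) (var_tuple (ar p))))
                                      (FNeg (FAtom (Hat p) (var_tuple (ar p))))))] ->
     forces M v r'' B).
  { intros B HF. assert (H : forces M w rho (forall_tuple (ar p) B)).
    { eapply bigAnd_in; [exact HCC|]. apply in_flat_map. exists p. split; [exact Hp|exact HF]. }
    unfold forall_tuple in H; rewrite fold_forall_iff in H by exact Hd;
      apply (H v r'' Hle Hag Hdom''). }
  split.
  - assert (H := Hin _ (or_introl eq_refl)). simpl in H |- *. rewrite Heq in H. exact H.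
  - assert (H := Hin _ (or_intror (or_introl eq_refl))). simpl in H |- *. rewrite Heq in H. exact H.
Qed.

Lemma core (M : kmodel) w (r : nat -> kU M) (g l1 m1 l2 m2 : formula) :
  let Up := fun v => kle M w v /\ forall x, kdom M v (r x) in
  (forall v, Up v -> forces M v r l1 -> forces M v r m1 -> False) ->
  (forall v, Up v -> forces M v r l2 -> forces M v r m2 -> False) ->
  (forall v, Up v -> (forall u, kle M v u -> ~ forces M u r l1) ->
        (forall u, kle M v u -> ~ forces M u r m1) -> False) ->
  (forall v, Up v -> (forall u, kle M v u -> ~ forces M u r l2) ->
        (forall u, kle M v u -> ~ forces M u r m2) -> False) ->
  forall P1 C1 P2 C2,
  (forall v, forces M v r P1 <-> forces M v r g /\ forces M v r (FOr m1 (FNeg m1)) /\ forces M v r (FOr l2 (FNeg l2))) ->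
  (forall v, forces M v r C1 <-> forces M v r l1 \/ forces M v r m2) ->
  (forall v, forces M v r P2 <-> forces M v r g /\ forces M v r (FOr l1 (FNeg l1)) /\ forces M v r (FOr m2 (FNeg m2))) ->
  (forall v, forces M v r C2 <-> forces M v r m1 \/ forces M v r l2) ->
  (RuleP M w r (FAnd g l1) l2 /\ RuleP M w r (FAnd g l2) l1 /\
   RuleP M w r (FAnd g m1) m2 /\ RuleP M w r (FAnd g m2) m1 <->
   RuleP M w r P1 C1 /\ RuleP M w r P2 C2).
Proof.
  intros Up Ca1 Ca2 Cb1 Cb2 P1 C1 P2 C2 EP1 EC1 EP2 EC2.
  assert (Upm : forall v u, Up v -> kle M v u -> Up u).
  { intros v u [H1 H2] H. split; [eapply kle_trans; eauto|]. intros x; eapply kdom_mono; eauto. }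
  assert (mono : forall F v u, kle M v u -> forces M v r F -> forces M u r F)
    by (intros; eapply forces_mono; eauto).
  unfold RuleP. fold Up. split.
  - intros (HS1 & HS2 & HS3 & HS4). split.
    + intros v Hv HP. apply EP1 in HP. destruct HP as (Hg & Hd1 & Hd2).
      apply EC1. simpl in Hd1, Hd2.
      destruct Hd2 as [Hl2|Hnl2]; [left; apply (HS2 v Hv (conj Hg Hl2))|].
      destruct Hd1 as [Hm1|Hnm1]; [right; apply (HS3 v Hv (conj Hg Hm1))|].
      exfalso. apply (Cb2 v Hv Hnl2). intros u Hu Hm2. apply (Hnm1 u Hu).
      apply (HS4 u (Upm _ _ Hv Hu) (conj (mono _ _ _ Hu Hg) Hm2)).
    + intros v Hv HP. apply EP2 in HP. destruct HP as (Hg & Hd1 & Hd2).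
      apply EC2. simpl in Hd1, Hd2.
      destruct Hd1 as [Hl1|Hnl1]; [right; apply (HS1 v Hv (conj Hg Hl1))|].
      destruct Hd2 as [Hm2|Hnm2]; [left; apply (HS4 v Hv (conj Hg Hm2))|].
      exfalso. apply (Cb1 v Hv Hnl1). intros u Hu Hm1. apply (Hnm2 u Hu).
      apply (HS3 u (Upm _ _ Hv Hu) (conj (mono _ _ _ Hu Hg) Hm1)).
  - intros [RD1 RD2].
    assert (D1 : forall v, Up v -> forces M v r g ->
       (forces M v r m1 \/ forall u, kle M v u -> ~ forces M u r m1) ->
       (forces M v r l2 \/ forall u, kle M v u -> ~ forces M u r l2) ->
       forces M v r l1 \/ forces M v r m2).
    { intros v Hv Hg H1 H2. apply EC1. apply RD1; auto. apply EP1. simpl. auto. }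
    assert (D2 : forall v, Up v -> forces M v r g ->
       (forces M v r l1 \/ forall u, kle M v u -> ~ forces M u r l1) ->
       (forces M v r m2 \/ forall u, kle M v u -> ~ forces M u r m2) ->
       forces M v r m1 \/ forces M v r l2).
    { intros v Hv Hg H1 H2. apply EC2. apply RD2; auto. apply EP2. simpl. auto. }
    split; [|split; [|split]]; intros v Hv [Hg Hx].
    + assert (nm2 : forall u, kle M v u -> ~ forces M u r m2).
      { intros u Hu Hm2. assert (Hu' := Upm _ _ Hv Hu).
        destruct (D2 u Hu' (mono _ _ _ Hu Hg) (or_introl (mono _ _ _ Hu Hx)) (or_introl Hm2)) as [H|H].
        - eapply Ca1; eauto.
        - eapply Ca2; eauto. }
      destruct (D2 v Hv Hg (or_introl Hx) (or_intror nm2)) as [H|H]; auto.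
      exfalso; eapply Ca1; eauto.
    + assert (nm1 : forall u, kle M v u -> ~ forces M u r m1).
      { intros u Hu Hm1. assert (Hu' := Upm _ _ Hv Hu).
        destruct (D1 u Hu' (mono _ _ _ Hu Hg) (or_introl Hm1) (or_introl (mono _ _ _ Hu Hx))) as [H|H].
        - eapply Ca1; eauto.
        - eapply Ca2; eauto. }
      destruct (D1 v Hv Hg (or_intror nm1) (or_introl Hx)) as [H|H]; auto.
      exfalso; eapply Ca2; eauto.
    + assert (nl2 : forall u, kle M v u -> ~ forces M u r l2).
      { intros u Hu Hl2. assert (Hu' := Upm _ _ Hv Hu).
        destruct (D1 u Hu' (mono _ _ _ Hu Hg) (or_introl (mono _ _ _ Hu Hx)) (or_introl Hl2)) as [H|H].
        - eapply Ca1; eauto.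
        - eapply Ca2; eauto. }
      destruct (D1 v Hv Hg (or_introl Hx) (or_intror nl2)) as [H|H]; auto.
      exfalso; eapply Ca1; eauto.
    + assert (nl1 : forall u, kle M v u -> ~ forces M u r l1).
      { intros u Hu Hl1. assert (Hu' := Upm _ _ Hv Hu).
        destruct (D2 u Hu' (mono _ _ _ Hu Hg) (or_introl Hl1) (or_introl (mono _ _ _ Hu Hx))) as [H|H].
        - eapply Ca1; eauto.
        - eapply Ca2; eauto. }
      destruct (D2 v Hv Hg (or_intror nl1) (or_introl Hx)) as [H|H]; auto.
      exfalso; eapply Ca2; eauto.
Qed.

Lemma distr {A : Type} (P : A -> Prop) (a1 a2 a3 a4 b1 b2 : A -> Prop) :
  (forall x, P x -> (a1 x /\ a2 x /\ a3 x /\ a4 x <-> b1 x /\ b2 x)) ->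
  ((forall x, P x -> a1 x) /\ (forall x, P x -> a2 x) /\ (forall x, P x -> a3 x) /\
   (forall x, P x -> a4 x) /\ True <-> (forall x, P x -> b1 x) /\ (forall x, P x -> b2 x)).
Proof.
  intros H. split.
  - intros (H1&H2&H3&H4&_). split; intros x Hx; apply (H x Hx); auto.
  - intros [H1 H2]. repeat split; intros x Hx; apply (H x Hx); auto.
Qed.

Lemma core_sw (M : kmodel) w (r : nat -> kU M) (g l1 m1 l2 m2 : formula) :
  let Up := fun v => kle M w v /\ forall x, kdom M v (r x) in
  (forall v, Up v -> forces M v r l1 -> forces M v r m1 -> False) ->
  (forall v, Up v -> forces M v r l2 -> forces M v r m2 -> False) ->
  (forall v, Up v -> (forall u, kle M v u -> ~ forces M u r l1) ->
        (forall u, kle M v u -> ~ forces M u r m1) -> False) ->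
  (forall v, Up v -> (forall u, kle M v u -> ~ forces M u r l2) ->
        (forall u, kle M v u -> ~ forces M u r m2) -> False) ->
  forall P1 C1 P2 C2,
  (forall v, forces M v r P1 <-> forces M v r g /\ forces M v r (FOr m1 (FNeg m1)) /\ forces M v r (FOr l2 (FNeg l2))) ->
  (forall v, forces M v r C1 <-> forces M v r l1 \/ forces M v r m2) ->
  (forall v, forces M v r P2 <-> forces M v r g /\ forces M v r (FOr l1 (FNeg l1)) /\ forces M v r (FOr m2 (FNeg m2))) ->
  (forall v, forces M v r C2 <-> forces M v r m1 \/ forces M v r l2) ->
  (RuleP M w r (FAnd g l1) l2 /\ RuleP M w r (FAnd g l2) l1 /\
   RuleP M w r (FAnd g m1) m2 /\ RuleP M w r (FAnd g m2) m1 <->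
   RuleP M w r P2 C2 /\ RuleP M w r P1 C1).
Proof.
  intros. rewrite (and_comm (RuleP M w r P2 C2)). eapply core; eauto.
Qed.

Ltac cc_one CC :=
  first
  [ let v := fresh "v" in let Hv := fresh in let Hdv := fresh in let H1 := fresh in let H2 := fresh in
    let Ha := fresh in
    intros v [Hv Hdv] H1 H2; destruct (CC v _ Hv Hdv) as [Ha _]; simpl in Ha;
    apply (Ha v (kle_refl _ _)); simpl in *; tauto
  | let v := fresh "v" in let Hv := fresh in let Hdv := fresh in let N1 := fresh in let N2 := fresh in
    let Hb := fresh in
    intros v [Hv Hdv] N1 N2; destruct (CC v _ Hv Hdv) as [_ Hb]; simpl in Hb;
    apply (Hb v (kle_refl _ _)); split;
    let u := fresh "u" in let Hu := fresh in
    intros u Hu; first [apply (N1 u Hu) | apply (N2 u Hu)] ].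

Ltac cc_tac C1 C2 :=
  first [ cc_one C1 | cc_one C2 | (intro; simpl; tauto) ].

Lemma key (M : kmodel) ar ps w rho b1 p1 ts1 b2 p2 ts2 G :
  (forall x, kdom M w (rho x)) -> forces M w rho (CC ar ps) ->
  In p1 ps -> In p2 ps -> length ts1 = ar p1 -> length ts2 = ar p2 ->
  (forces M w rho (tr_s (Lit b1 (p1, ts1)) (Lit b2 (p2, ts2)) G) <->
   forces M w rho (tr_d [Lit b1 (p1,ts1); compl (Lit b2 (p2,ts2))] G) /\
   forces M w rho (tr_d [compl (Lit b1 (p1,ts1)); Lit b2 (p2,ts2)] G)).
Proof.
  intros Hd HCC Hp1 Hp2 Hl1 Hl2.
  set (S := fv G ++ flat_map fv_term ts1 ++ flat_map fv_term ts2).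
  assert (CC1 := CC_at M ar ps w rho p1 ts1 Hd HCC Hp1 Hl1).
  assert (CC2 := CC_at M ar ps w rho p2 ts2 Hd HCC Hp2 Hl2).
  destruct b1, b2; unfold tr_s, tr_d, tr_d_PN, bigAnd, bigOr;
  cbn [compl lpos latom negb filter map Bool.eqb fold_right fst snd forces];
  (repeat rewrite (fun P C H => rule_iff M w rho P C S H Hd);
    [ | try (intro x; unfold S, hatF, atomF, fv_terms; simpl; rewrite ?in_app_iff; simpl; tauto) .. ]);
  try apply distr.
  - intros r Hr. apply (core M w r (nnF G) (atomF (p1,ts1)) (hatF (p1,ts1)) (atomF (p2,ts2)) (hatF (p2,ts2))); cc_tac CC1 CC2.
  - intros r Hr. apply (core_sw M w r (nnF G) (hatF (p1,ts1)) (atomF (p1,ts1)) (atomF (p2,ts2)) (hatF (p2,ts2))); cc_tac CC1 CC2.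
  - intros r Hr. apply (core M w r (nnF G) (hatF (p1,ts1)) (atomF (p1,ts1)) (atomF (p2,ts2)) (hatF (p2,ts2))); cc_tac CC1 CC2.
  - intros r Hr. apply (core_sw M w r (nnF G) (atomF (p1,ts1)) (hatF (p1,ts1)) (atomF (p2,ts2)) (hatF (p2,ts2))); cc_tac CC1 CC2.
Qed.

Theorem lemma11 (ar : nat -> nat) (ps : list nat) (L1 L2 : literal) (G : formula) :
  In (fst (latom L1)) ps -> In (fst (latom L2)) ps ->
  length (snd (latom L1)) = ar (fst (latom L1)) ->
  length (snd (latom L2)) = ar (fst (latom L2)) ->
  no_imp G -> hat_free G ->
  ientails (CC ar ps)
    (FIff (tr_s L1 L2 G)
          (FAnd (tr_d [L1; compl L2] G) (tr_d [compl L1; L2] G))).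
Proof.
  intros Hp1 Hp2 Hl1 Hl2 _ _ M w rho Hd HCC.
  destruct L1 as [b1 [p1 ts1]], L2 as [b2 [p2 ts2]]; simpl in *.
  assert (K : forall w', kle M w w' ->
     (forces M w' rho (tr_s (Lit b1 (p1, ts1)) (Lit b2 (p2, ts2)) G) <->
      forces M w' rho (tr_d [Lit b1 (p1,ts1); compl (Lit b2 (p2,ts2))] G) /\
      forces M w' rho (tr_d [compl (Lit b1 (p1,ts1)); Lit b2 (p2,ts2)] G))).
  { intros w' Hw. apply (key M ar ps); auto.
    - intros x; eapply kdom_mono; eauto.
    - eapply forces_mono; eauto. }
  unfold FIff. split; intros w' Hw H; apply (K w' Hw); exact H.
Qed.
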